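(* The following five $9$-dimensional complex Lie algebras are mutually non-isomorphic. Each has basis $\mathbf x_1,\dots,\mathbf x_7,\mathbf y_1,\mathbf y_2$, with the listed nonzero brackets (together with those obtained by antisymmetry) and all other brackets of basis elements equal to zero: (1) $N^{9,2}_1$: $[\mathbf x_1,\mathbf x_2]=[\mathbf x_4,\mathbf x_5]=[\mathbf x_6,\mathbf x_7]=\mathbf y_1$, $[\mathbf x_3,\mathbf x_7]=\mathbf y_2$; (2) $N^{9,2}_2$: $[\mathbf x_2,\mathbf x_7]=[\mathbf x_4,\mathbf x_5]=\mathbf y_1$, $[\mathbf x_1,\mathbf x_3]=[\mathbf x_6,\mathbf x_7]=\mathbf y_2$; (3) $N^{9,2}_3$: $[\mathbf x_1,\mathbf x_2]=[\mathbf x_3,\mathbf x_7]=[\mathbf x_5,\mathbf x_6]=\mathbf y_1$, $[\mathbf x_4,\mathbf x_6]=[\mathbf x_5,\mathbf x_7]=\mathbf y_2$; (4) $N^{9,2}_4$: $[\mathbf x_7,\mathbf x_2]=[\mathbf x_4,\mathbf x_5]=[\mathbf x_6,\mathbf x_1]=\mathbf y_1$, $[\mathbf x_7,\mathbf x_3]=[\mathbf x_5,\mathbf x_6]=\mathbf y_2$; (5) $N^{9,2}_5$: $[\mathbf x_1,\mathbf x_7]=[\mathbf x_3,\mathbf x_4]=[\mathbf x_5,\mathbf x_6]=\mathbf y_1$, $[\mathbf x_7,\mathbf x_3]=[\mathbf x_4,\mathbf x_5]=[\mathbf x_6,\mathbf x_2]=\mathbf y_2$. *)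

(* Defs.v *)
From HB Require Import structures.
From mathcomp Require Import all_boot all_order all_algebra.
From mathcomp Require Import complex.
From mathcomp Require Import Rstruct.
Set Implicit Arguments. Unset Strict Implicit. Unset Printing Implicit Defensive.
Import Order.TTheory GRing.Theory Num.Theory.
Local Open Scope ring_scope.

Definition C : Type := complex Rdefinitions.R.

(* A 9-dimensional algebra is given by a table of nonzero brackets of basis elements:
   a triple (a, b, c) means [e_a, e_b] = e_c (basis indices 1..9, with
   e_1..e_7 = x_1..x_7, e_8 = y_1, e_9 = y_2).  Brackets obtained by antisymmetry are
   added automatically; all other brackets of basis elements are zero. *)
Definition table := seq (nat * nat * nat).

Definition bvec (k : nat) : 'rV[C]_9 := delta_mx 0 (inord k.-1).

Definition bbr (s : table) (i j : 'I_9) : 'rV[C]_9 :=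
  \sum_(t <- s)
     ((((t.1.1 == i.+1) && (t.1.2 == j.+1))%:R
       - ((t.1.2 == i.+1) && (t.1.1 == j.+1))%:R) *: bvec t.2).

Definition bracket (s : table) (u v : 'rV[C]_9) : 'rV[C]_9 :=
  \sum_(i < 9) \sum_(j < 9) (u 0 i * v 0 j) *: bbr s i j.

Definition isomorphic (s1 s2 : table) : Prop :=
  exists A : 'M[C]_9, A \in unitmx /\
    forall u v : 'rV[C]_9, bracket s2 (u *m A) (v *m A) = bracket s1 u v *m A.

Definition y1 := 8%N.
Definition y2 := 9%N.

Definition N1 : table :=
  [:: (1,2,y1); (4,5,y1); (6,7,y1); (3,7,y2)]%N.
Definition N2 : table :=
  [:: (2,7,y1); (4,5,y1); (1,3,y2); (6,7,y2)]%N.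
Definition N3 : table :=
  [:: (1,2,y1); (3,7,y1); (5,6,y1); (4,6,y2); (5,7,y2)]%N.
Definition N4 : table :=
  [:: (7,2,y1); (4,5,y1); (6,1,y1); (7,3,y2); (5,6,y2)]%N.
Definition N5 : table :=
  [:: (1,7,y1); (3,4,y1); (5,6,y1); (7,3,y2); (4,5,y2); (6,2,y2)]%N.

Definition N92 (k : 'I_5) : table :=
  match val k with
  | 0 => N1 | 1 => N2 | 2 => N3 | 3 => N4 | _ => N5
  end%N.

(* Main.v *)
Require Import Defs.
From HB Require Import structures.
From mathcomp Require Import all_boot all_order all_algebra.
From mathcomp Require Import complex ring Rstruct.
Set Implicit Arguments. Unset Strict Implicit. Unset Printing Implicit Defensive.
Import Order.TTheory GRing.Theory Num.Theory.
Local Open Scope ring_scope.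

Notation CC := (complex Rdefinitions.R).
Definition coefW (s : table) (g : nat -> CC) (i j : nat) : CC :=
  \sum_(t <- s) ((((t.1.1 == i.+1) && (t.1.2 == j.+1))%:R
       - ((t.1.2 == i.+1) && (t.1.1 == j.+1))%:R) * g t.2).
Definition Wm (s : table) (g : nat -> CC) : 'M[CC]_9 := \matrix_(i, j) coefW s g i j.
Definition gv (c : 'cV[CC]_9) : nat -> CC := fun k => c (inord k.-1) 0.

Lemma quad_entry (M : 'M[CC]_9) i j :
  ((delta_mx 0 i : 'rV[CC]_9) *m M *m (delta_mx 0 j : 'rV[CC]_9)^T) 0 0 = M i j.
Proof. by rewrite -rowE trmx_delta -colE !mxE. Qed.

Lemma bbr_c s i j c : (bbr s i j *m c) 0 0 = coefW s (gv c) i j.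
Proof.
rewrite /bbr /coefW mulmx_suml summxE; apply: eq_bigr => t _.
by rewrite -scalemxAl mxE /bvec -rowE mxE.
Qed.

Lemma bracket_form s u v c :
  (bracket s u v *m c) 0 0 = (u *m Wm s (gv c) *m v^T) 0 0.
Proof.
rewrite /bracket mulmx_suml summxE mxE.
under eq_bigr => k _ do rewrite mulmx_suml summxE.
under [RHS]eq_bigr => j _ do rewrite !mxE big_distrl.
rewrite [RHS]exchange_big /=; apply: eq_bigr => k _; apply: eq_bigr => j _.
by rewrite -scalemxAl mxE bbr_c !mxE mulrAC.
Qed.

Lemma iso_W s1 s2 (A : 'M[CC]_9) :
  (forall u v, bracket s2 (u *m A) (v *m A) = bracket s1 u v *m A) ->
  forall c, A *m Wm s2 (gv c) *m A^T = Wm s1 (gv (A *m c)).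
Proof.
move=> H c; apply/matrixP => i j.
rewrite -quad_entry -[RHS]quad_entry -bracket_form.
have -> : (delta_mx 0 i : 'rV[CC]_9) *m (A *m Wm s2 (gv c) *m A^T) *m (delta_mx 0 j : 'rV[CC]_9)^T =
  (delta_mx 0 i *m A) *m Wm s2 (gv c) *m (delta_mx 0 j *m A)^T.
  by rewrite trmx_mul !mulmxA.
by rewrite -bracket_form H -mulmxA.
Qed.

Definition E (k l : nat) : 'M[CC]_9 := \matrix_(i, j) (((k == i) && (l == j))%:R).
Definition Dm (L : seq (nat * nat)) : 'M[CC]_9 := \sum_(e <- L) (E e.1 e.2 - E e.2 e.1).
Definition L1 (s : table) := [seq (t.1.1.-1, t.1.2.-1) | t <- s & t.2 == 8%N].
Definition L2 (s : table) := [seq (t.1.1.-1, t.1.2.-1) | t <- s & t.2 == 9%N].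
Definition okt (s : table) :=
  all (fun t : nat * nat * nat => [&& 0 < t.1.1, 0 < t.1.2 & (t.2 == 8) || (t.2 == 9)])%N s.

Lemma DmE L i j : Dm L i j =
  \sum_(e <- L) ((((e.1 == i) && (e.2 == j))%:R - ((e.2 == i) && (e.1 == j))%:R)).
Proof. by rewrite /Dm summxE; apply: eq_bigr => e _; rewrite !mxE. Qed.

Lemma Wm_dec s g : okt s -> Wm s g = g 8%N *: Dm (L1 s) + g 9%N *: Dm (L2 s).
Proof.
move=> ok; apply/matrixP => i j; rewrite !mxE !DmE.
elim: s ok => [|[[a b] c] s IH] /=; first by rewrite /coefW !big_nil => _; ring.
case/andP => /and3P [ha hb hc] /IH {}IH.
rewrite /coefW big_cons -/(coefW s g i j) IH /=.
case: a ha => // a _; case: b hb => // b _ /=.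
by case/orP: hc => /eqP -> /=; rewrite !big_cons /= !eqSS; ring.
Qed.

Definition okL (L : seq (nat * nat)) := all (fun e : nat * nat => (e.1 < 9) && (e.2 < 9))%N L.

Lemma EE k l i j : E k l i j = ((k == i) && (l == j))%:R.
Proof. exact: mxE. Qed.

Lemma E_delta k l : (k < 9)%N -> (l < 9)%N -> E k l = delta_mx (inord k) (inord l).
Proof.
move=> hk hl; apply/matrixP => i j; rewrite !mxE.
by rewrite -!val_eqE /= !inordK // ![(k == _)]eq_sym ![(l == _)]eq_sym.
Qed.

Lemma rank_Dm L : okL L -> (\rank (Dm L) <= 2 * size L)%N.
Proof.
elim: L => [|[k l] L IH] /=; first by rewrite /Dm big_nil mxrank0.
case/andP => /andP [hk hl] /IH {}IH.
rewrite /Dm big_cons -/(Dm L) /=.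
apply: leq_trans (mxrank_add _ _) _.
rewrite mulnS; apply: leq_add IH; apply: leq_trans (mxrank_add _ _) _.
rewrite -scaleN1r -[2%N]/(1 + 1)%N; apply: leq_add; last apply: leq_trans (mxrank_scale _ _) _.
  by rewrite E_delta // mxrank_delta.
by rewrite E_delta // mxrank_delta.
Qed.

Lemma rank_conj (A M : 'M[CC]_9) : A \in unitmx -> \rank (A *m M *m A^T) = \rank M.
Proof.
move=> uA; rewrite mxrankMfree ?row_free_unit ?unitmx_tr //.
by rewrite -mxrank_tr trmx_mul mxrankMfree ?row_free_unit ?unitmx_tr // mxrank_tr.
Qed.

Lemma unit_row (A : 'M[CC]_9) i : A \in unitmx -> (forall k, A i k = 0) -> False.
Proof.
move=> uA h.
have r0 : (delta_mx 0 i : 'rV[CC]_9) *m A = 0.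
  by rewrite -rowE; apply/matrixP => a b; rewrite !mxE h.
have := congr1 (fun M => (M *m invmx A) 0 i) r0.
by rewrite mulmxK // mul0mx !mxE !eqxx /= => /eqP; rewrite oner_eq0.
Qed.

Lemma colA (A : 'M[CC]_9) k i : (A *m (delta_mx k 0 : 'cV[CC]_9)) i 0 = A i k.
Proof. by rewrite -colE mxE. Qed.

Lemma mxNij m n (M : 'M[CC]_(m, n)) i j : (- M) i j = - M i j.
Proof. by rewrite mxE. Qed.

Lemma pE (p : 'rV[CC]_9) k l j : (k < 9)%N -> (p *m E k l) 0 j = p 0 (inord k) * (l == j)%:R.
Proof.
move=> hk; rewrite mxE (bigD1 (inord k)) //= big1 ?addr0.
  by rewrite EE inordK // eqxx.
by move=> i /negPf ni; rewrite -val_eqE /= inordK // in ni; rewrite EE eq_sym ni mulr0.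
Qed.

Lemma pD (p : 'rV[CC]_9) L j : okL L -> (p *m Dm L) 0 j =
  \sum_(e <- L) (p 0 (inord e.1) * (e.2 == j)%:R - p 0 (inord e.2) * (e.1 == j)%:R).
Proof.
elim: L => [|[k l] L IH] /=; first by rewrite /Dm !big_nil mulmx0 mxE.
case/andP => /andP [hk hl] /IH {}IH.
by rewrite /Dm !big_cons -/(Dm L) /= mulmxDr mxE IH mulmxBr mxE mxNij !pE.
Qed.

Lemma pEq (p q : 'rV[CC]_9) k l : (k < 9)%N -> (l < 9)%N ->
  (p *m E k l *m q^T) 0 0 = p 0 (inord k) * q 0 (inord l).
Proof.
move=> hk hl; rewrite mxE (bigD1 (inord l)) //= big1 ?addr0.
  by rewrite pE // mxE inordK // eqxx mulr1.
move=> j /negPf nj; rewrite -val_eqE /= inordK // in nj; rewrite pE //.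
by rewrite eq_sym nj mulr0 mul0r.
Qed.

Lemma pDq (p q : 'rV[CC]_9) L : okL L -> (p *m Dm L *m q^T) 0 0 =
  \sum_(e <- L) (p 0 (inord e.1) * q 0 (inord e.2) - p 0 (inord e.2) * q 0 (inord e.1)).
Proof.
elim: L => [|[k l] L IH] /=; first by rewrite /Dm !big_nil mulmx0 mul0mx mxE.
case/andP => /andP [hk hl] /IH {}IH.
by rewrite /Dm !big_cons -/(Dm L) /= mulmxDr mulmxDl mxE IH mulmxBr mulmxBl mxE mxNij !pEq.
Qed.

Ltac natc m Hm := first [ exfalso; move: Hm; rewrite !ltnS ?ltn0; done | destruct m as [|m]; [ | natc m Hm ] ].
Ltac ordc p := let m := fresh "m" in let Hm := fresh "Hm" in
  case: p => m Hm; natc m Hm.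

Lemma rank_mxsub r (f h : 'I_r -> 'I_9) (M : 'M[CC]_9) : (\rank (mxsub f h M) <= \rank M)%N.
Proof.
have -> : mxsub f h M = rowsub f 1%:M *m M *m colsub h 1%:M.
  by rewrite mul_rowsub_mx mul1mx mulmx_colsub mulmx1 mxsubcr.
by apply: leq_trans (mxrankM_maxl _ _) (mxrankM_maxr _ _).
Qed.

Lemma lb_gen r (f h : 'I_r -> 'I_9) (M : 'M[CC]_9) :
  is_trig_mx (mxsub f h M) -> \prod_(i < r) M (f i) (h i) != 0 -> (r <= \rank M)%N.
Proof.
move=> tr pr; apply: leq_trans (rank_mxsub f h M).
rewrite mxrank_unit // unitmxE (det_trig tr) unitfE.
by under eq_bigr do rewrite mxE.
Qed.

Lemma sq_neq0 (x y : CC) (k : nat) : x ^+ 2 = y ^+ k -> y != 0 -> x != 0.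
Proof.
move=> e ny; apply/eqP => x0; move: e; rewrite x0 expr0n /= => /eqP.
by rewrite eq_sym expf_eq0 (negPf ny) andbF.
Qed.

Notation "'o' k" := (@Ordinal 9 k isT) (at level 0, k at level 0).
Definition sel (l : seq 'I_9) (p : nat) : 'I_9 := nth ord0 l p.

Ltac lbt r rl cl :=
  let ha := fresh "ha" in move=> ha; rewrite Wm_dec //;
  apply: (@lb_gen r (fun p => sel rl p) (fun p => sel cl p)); last first;
  [ apply: (@sq_neq0 _ _ (2*r)%N _ ha);
    rewrite !big_ord_recr big_ord0 /= !mxE !DmE /L1 /L2 /sel /= !big_cons ?big_nil /=; ring
  | let p := fresh "p" in let q := fresh "q" in
    apply/is_trig_mxP => p q; ordc p; ordc q; move=> // _;
    rewrite /mxsub ?mxE ?DmE /L1 /L2 /sel /= ?big_cons ?big_nil /=; ring ].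

Lemma lbN1a g : g 8%N != 0 -> (6 <= \rank (Wm N1 g))%N.
Proof. lbt 6%N [:: o 0; o 1; o 3; o 4; o 5; o 6] [:: o 1; o 0; o 4; o 3; o 6; o 5]. Qed.
Lemma lbN1b g : g 9%N != 0 -> (2 <= \rank (Wm N1 g))%N.
Proof. lbt 2%N [:: o 2; o 6] [:: o 6; o 2]. Qed.
Lemma lbN2a g : g 8%N != 0 -> (4 <= \rank (Wm N2 g))%N.
Proof. lbt 4%N [:: o 1; o 6; o 3; o 4] [:: o 6; o 1; o 4; o 3]. Qed.
Lemma lbN2b g : g 9%N != 0 -> (4 <= \rank (Wm N2 g))%N.
Proof. lbt 4%N [:: o 0; o 2; o 5; o 6] [:: o 2; o 0; o 6; o 5]. Qed.
Lemma lbN3a g : g 8%N != 0 -> (6 <= \rank (Wm N3 g))%N.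
Proof. lbt 6%N [:: o 0; o 1; o 2; o 4; o 5; o 6] [:: o 1; o 0; o 6; o 5; o 4; o 2]. Qed.
Lemma lbN3b g : g 9%N != 0 -> (4 <= \rank (Wm N3 g))%N.
Proof. lbt 4%N [:: o 3; o 4; o 6; o 5] [:: o 5; o 6; o 4; o 3]. Qed.
Lemma lbN4a g : g 8%N != 0 -> (6 <= \rank (Wm N4 g))%N.
Proof. lbt 6%N [:: o 0; o 1; o 3; o 4; o 5; o 6] [:: o 5; o 6; o 4; o 3; o 0; o 1]. Qed.
Lemma lbN4b g : g 9%N != 0 -> (4 <= \rank (Wm N4 g))%N.
Proof. lbt 4%N [:: o 2; o 6; o 4; o 5] [:: o 6; o 2; o 5; o 4]. Qed.
Lemma lbN5a g : g 8%N != 0 -> (6 <= \rank (Wm N5 g))%N.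
Proof. lbt 6%N [:: o 0; o 5; o 2; o 3; o 4; o 6] [:: o 6; o 4; o 3; o 2; o 5; o 0]. Qed.
Lemma lbN5b g : g 9%N != 0 -> (6 <= \rank (Wm N5 g))%N.
Proof. lbt 6%N [:: o 1; o 4; o 2; o 6; o 3; o 5] [:: o 5; o 3; o 6; o 2; o 4; o 1]. Qed.

Lemma Wm0 s g : okt s -> g 8%N = 0 -> g 9%N = 0 -> Wm s g = 0.
Proof. by move=> ok h8 h9; rewrite Wm_dec // h8 h9 !scale0r addr0. Qed.

Lemma ubA s g : okt s -> okL (L2 s) -> g 8%N = 0 -> (\rank (Wm s g) <= 2 * size (L2 s))%N.
Proof.
move=> ok okl h8; rewrite Wm_dec // h8 scale0r add0r.
exact: leq_trans (mxrank_scale _ _) (rank_Dm okl).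
Qed.

Lemma ubB s g : okt s -> okL (L1 s) -> g 9%N = 0 -> (\rank (Wm s g) <= 2 * size (L1 s))%N.
Proof.
move=> ok okl h9; rewrite Wm_dec // h9 scale0r addr0.
exact: leq_trans (mxrank_scale _ _) (rank_Dm okl).
Qed.

Definition i7 : 'I_9 := inord 7.
Definition i8 : 'I_9 := inord 8.
Lemma i78 : i7 != i8.
Proof. by rewrite -val_eqE /= /i7 /i8 !inordK. Qed.

Lemma gvd8 (k : 'I_9) : gv (delta_mx k 0) 8%N = (i7 == k)%:R.
Proof. by rewrite /gv mxE eqxx andbT. Qed.
Lemma gvd9 (k : 'I_9) : gv (delta_mx k 0) 9%N = (i8 == k)%:R.
Proof. by rewrite /gv mxE eqxx andbT. Qed.
Lemma gvA8 (A : 'M[CC]_9) (k : 'I_9) : gv (A *m delta_mx k 0) 8%N = A i7 k.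
Proof. by rewrite /gv colA. Qed.
Lemma gvA9 (A : 'M[CC]_9) (k : 'I_9) : gv (A *m delta_mx k 0) 9%N = A i8 k.
Proof. by rewrite /gv colA. Qed.

Lemma key s1 s2 (c : 'cV[CC]_9) (lo hi : nat) :
  okt s1 -> isomorphic s1 s2 ->
  (\rank (Wm s2 (gv c)) <= hi)%N -> (0 < lo)%N -> (lo <= \rank (Wm s2 (gv c)))%N ->
  (forall g : nat -> CC, g 8%N != 0 -> (hi < \rank (Wm s1 g))%N) ->
  (forall g : nat -> CC, g 9%N != 0 -> (hi < \rank (Wm s1 g))%N) -> False.
Proof.
move=> ok1 [A [uA H]] hhi hlo0 hlo h8 h9.
have R : \rank (Wm s1 (gv (A *m c))) = \rank (Wm s2 (gv c)).
  by rewrite -(iso_W H c) rank_conj.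
have [e8|n8] := eqVneq (gv (A *m c) 8%N) 0; last by have := h8 _ n8; rewrite R ltnNge hhi.
have [e9|n9] := eqVneq (gv (A *m c) 9%N) 0; last by have := h9 _ n9; rewrite R ltnNge hhi.
by move: hlo; rewrite -R Wm0 // mxrank0; case: lo hlo0.
Qed.

Lemma ne10 : (1 : CC) != 0. Proof. exact: oner_neq0. Qed.

Lemma g78 : gv (delta_mx i7 0) 8%N = 1.
Proof. by rewrite gvd8 (eqxx i7). Qed.
Lemma g79 : gv (delta_mx i7 0) 9%N = 0.
Proof. by rewrite gvd9; move/negPf: i78; rewrite eq_sym => ->. Qed.
Lemma g88 : gv (delta_mx i8 0) 8%N = 0.
Proof. by rewrite gvd8; move/negPf: i78 => ->. Qed.
Lemma g89 : gv (delta_mx i8 0) 9%N = 1.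
Proof. by rewrite gvd9 (eqxx i8). Qed.

Ltac keyt s1 s2 c n ub lb la lb2 :=
  let I := fresh "I" in
  move=> I; apply: (@key s1 s2 c n n _ I) => //;
  [ by apply: leq_trans (ub _ _ _ _ _) _ => //; rewrite ?g88 ?g79
  | by apply: lb; rewrite ?g89 ?g78 oner_neq0
  | let g := fresh "g" in by move=> g /la; apply: leq_trans
  | let g := fresh "g" in by move=> g /lb2; apply: leq_trans ].

Lemma n12 : ~ isomorphic N2 N1.
Proof. keyt N2 N1 (delta_mx i8 0 : 'cV[CC]_9) 2%N ubA lbN1b lbN2a lbN2b. Qed.
Lemma n13 : ~ isomorphic N3 N1.
Proof. keyt N3 N1 (delta_mx i8 0 : 'cV[CC]_9) 2%N ubA lbN1b lbN3a lbN3b. Qed.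
Lemma n14 : ~ isomorphic N4 N1.
Proof. keyt N4 N1 (delta_mx i8 0 : 'cV[CC]_9) 2%N ubA lbN1b lbN4a lbN4b. Qed.
Lemma n15 : ~ isomorphic N5 N1.
Proof. keyt N5 N1 (delta_mx i8 0 : 'cV[CC]_9) 2%N ubA lbN1b lbN5a lbN5b. Qed.
Lemma n25 : ~ isomorphic N5 N2.
Proof. keyt N5 N2 (delta_mx i7 0 : 'cV[CC]_9) 4%N ubB lbN2a lbN5a lbN5b. Qed.
Lemma n35 : ~ isomorphic N5 N3.
Proof. keyt N5 N3 (delta_mx i8 0 : 'cV[CC]_9) 4%N ubA lbN3b lbN5a lbN5b. Qed.
Lemma n45 : ~ isomorphic N5 N4.
Proof. keyt N5 N4 (delta_mx i8 0 : 'cV[CC]_9) 4%N ubA lbN4b lbN5a lbN5b. Qed.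

Lemma Rk s1 s2 (A : 'M[CC]_9) (H : forall u v, bracket s2 (u *m A) (v *m A) = bracket s1 u v *m A) c :
  A \in unitmx -> \rank (Wm s1 (gv (A *m c))) = \rank (Wm s2 (gv c)).
Proof. by move=> uA; rewrite -(iso_W H c) rank_conj. Qed.

Lemma key2 s1 : okt s1 -> isomorphic s1 N2 ->
  (forall g : nat -> CC, g 8%N != 0 -> (4 < \rank (Wm s1 g))%N) -> False.
Proof.
move=> ok1 [A [uA H]] h8.
apply: (@unit_row A i7 uA) => k.
have ub : (\rank (Wm N2 (gv (delta_mx k ord0 : 'cV[CC]_9))) <= 4)%N.
  have [<-|nk] := eqVneq i7 k.
    by apply: leq_trans (ubB _ _ _) _ => //; exact: g79.
  by apply: leq_trans (ubA _ _ _) _ => //; rewrite gvd8 (negPf nk).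
have [//|nz] := eqVneq (A i7 k) 0.
have := h8 (gv (A *m delta_mx k 0)); rewrite gvA8 => /(_ nz).
by rewrite (Rk H _ uA) ltnNge ub.
Qed.

Lemma n23 : ~ isomorphic N3 N2.
Proof. move=> I; apply: (key2 _ I) => // g /lbN3a; exact: leq_trans. Qed.
Lemma n24 : ~ isomorphic N4 N2.
Proof. move=> I; apply: (key2 _ I) => // g /lbN4a; exact: leq_trans. Qed.

Lemma n34 : ~ isomorphic N3 N4.
Proof.
move=> [A [uA H]].
have zero k : k != i7 -> A i7 k = 0.
  move=> nk; have [//|nz] := eqVneq (A i7 k) 0.
  have := @lbN3a (gv (A *m delta_mx k 0)); rewrite gvA8 => /(_ nz).
  rewrite (Rk H _ uA) => lb.
  have : (\rank (Wm N4 (gv (delta_mx k ord0 : 'cV[CC]_9))) <= 4)%N.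
    by apply: leq_trans (ubA _ _ _) _ => //; rewrite gvd8 eq_sym (negPf nk).
  by rewrite leqNgt (leq_trans _ lb).
have a0 : A i7 i7 != 0.
  apply/eqP => a0; apply: (@unit_row A i7 uA) => k.
  by have [->|nk] := eqVneq k i7; [|apply: zero].
have H2 := iso_W H (delta_mx i8 0).
rewrite Wm_dec // Wm_dec // g88 g89 gvA8 gvA9 zero ?(negbT i78) in H2; last first.
  by rewrite eq_sym i78.
rewrite !scale0r !add0r scale1r in H2.
have H1 := iso_W H (delta_mx i7 0).
rewrite Wm_dec // Wm_dec // g78 g79 gvA8 gvA9 !scale0r !addr0 scale1r in H1.
pose u : 'rV[CC]_9 := delta_mx 0 (o 0).
pose v : 'rV[CC]_9 := delta_mx 0 (o 1).
have uD (w : 'rV[CC]_9) : w \in [:: u; v] -> w *m Dm (L2 N3) = 0.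
  rewrite !inE => /orP [] /eqP ->; rewrite -rowE; apply/matrixP => a j;
  rewrite !mxE DmE /L2 /= !big_cons big_nil /=; ring.
have pz (w : 'rV[CC]_9) : w \in [:: u; v] -> (w *m A) *m Dm (L2 N4) = 0.
  move=> wi; have e : (w *m A) *m Dm (L2 N4) *m A^T = 0.
    have -> : w *m A *m Dm (L2 N4) *m A^T = w *m (A *m Dm (L2 N4) *m A^T) by rewrite !mulmxA.
    by rewrite H2 -scalemxAr uD // scaler0.
  have := congr1 (mulmx ^~ (invmx A^T)) e.
  by rewrite mulmxK ?unitmx_tr // mul0mx.
have comp (w : 'rV[CC]_9) : w \in [:: u; v] ->
   [/\ (w *m A) 0 (inord 6) = 0, (w *m A) 0 (inord 4) = 0 & (w *m A) 0 (inord 5) = 0].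
  move=> /pz e; split.
  - have := congr1 (fun M : 'rV[CC]_9 => M 0 (o 2)) e; rewrite pD // mxE /L2 /= !big_cons big_nil /=.
    by move=> e'; rewrite -[RHS]e'; ring.
  - have := congr1 (fun M : 'rV[CC]_9 => M 0 (o 5)) e; rewrite pD // mxE /L2 /= !big_cons big_nil /=.
    by move=> e'; rewrite -[RHS]e'; ring.
  - have := congr1 (fun M : 'rV[CC]_9 => M 0 (o 4)) e; rewrite pD // mxE /L2 /= !big_cons big_nil /=.
    by move=> e'; apply/eqP; rewrite -oppr_eq0; apply/eqP; rewrite -[RHS]e'; ring.
have [p6 p4 p5] := comp u (mem_head _ _).
have [q6 q4 q5] : [/\ (v *m A) 0 (inord 6) = 0, (v *m A) 0 (inord 4) = 0 & (v *m A) 0 (inord 5) = 0].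
  by apply: comp; rewrite !inE eqxx orbT.
have := congr1 (fun M : 'M[CC]_9 => (u *m M *m v^T) 0 0) H1.
have -> : u *m (A *m Dm (L1 N4) *m A^T) *m v^T = (u *m A) *m Dm (L1 N4) *m (v *m A)^T.
  by rewrite trmx_mul !mulmxA.
rewrite pDq // quad_entry /L1 /= !big_cons big_nil /= p6 p4 p5 q6 q4 q5.
rewrite !mxE !DmE /L1 /L2 /= !big_cons big_nil /=.
rewrite !mul0r !mulr0 !subr0 !addr0 mulr1 => /esym/eqP.
by rewrite mulr0 addr0; apply/negP.
Qed.

Lemma iso_sym s1 s2 : isomorphic s1 s2 -> isomorphic s2 s1.
Proof.
move=> [A [uA H]]; exists (invmx A); split; first by rewrite unitmx_inv.
move=> u v; have := H (u *m invmx A) (v *m invmx A).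
by rewrite !mulmxKV // => ->; rewrite mulmxK.
Qed.

Theorem theorem3 : forall i j : 'I_5, i != j -> ~ isomorphic (N92 i) (N92 j).
Proof.
have S s1 s2 : ~ isomorphic s1 s2 -> ~ isomorphic s2 s1 by move=> h /iso_sym.
move=> i j; ordc i; ordc j; move=> /= neq.
all: try discriminate neq.
all: rewrite /N92 /=.
- exact: (S N2 N1 n12).
- exact: (S N3 N1 n13).
- exact: (S N4 N1 n14).
- exact: (S N5 N1 n15).
- exact: n12.
- exact: (S N3 N2 n23).
- exact: (S N4 N2 n24).
- exact: (S N5 N2 n25).
- exact: n13.
- exact: n23.
- exact: n34.
- exact: (S N5 N3 n35).
- exact: n14.
- exact: n24.
- exact: (S N3 N4 n34).
- exact: (S N5 N4 n45).
- exact: n15.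
- exact: n25.
- exact: n35.
- exact: n45.
Qed.
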